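(* Let $H$ be a binary tree based graph and let ${\bf SAT}(H)$ be the set of satisfying assignments of $\phi_H$. Then $\sum_{S\in{\bf SAT}(H)} (1/2)^{|S\setminus Fix(S)|}=1$.
   Context: Sets of literals never contain a variable together with its negation; $Vars(S)$ is the set of variables occurring in $S$. A rooted tree is extended if none of its leaves has a sibling. A graph $H$ is a binary tree based graph if it is the edge-disjoint union of extended rooted trees $T_1,\dots,T_m$ with roots $t_1,\dots,t_m$ such that every leaf of some $T_i$ is a leaf of exactly two of the trees, and any two trees have at most one common vertex, which is a leaf of both. $T_i,T_j$ are adjacent if they share a leaf $\ell_{i,j}$; $P_{i,j}$ is the path between $t_i$ and $t_j$ in $T_i\cup T_j$. A pseudoedge is a pair $\{t_i,t_j\}$ with $T_i,T_j$ adjacent. $\phi_H$ is the CNF on variables $V(H)$ with a clause $C_{i,j}$ whose literals are the positive literals of $V(P_{i,j})$, for each pseudoedge $\{t_i,t_j\}$. ${\bf SAT}(H)$ is the set of sets $S$ of literals with $Vars(S)=V(H)$ satisfying every clause. For a set $S$ of literals, the positive literal $\ell_{i,j}$ is fixed w.r.t. $S$ if $\ell_{i,j}\in S$ and all other variables of $C_{i,j}$ occur negatively in $S$; $Fix(S)$ is the set of fixed literals. *)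

(* Defs.v *)
From HB Require Import structures.
From mathcomp Require Import all_boot all_algebra.
From mathcomp Require Import boolp.

Set Implicit Arguments.
Unset Strict Implicit.
Unset Printing Implicit Defensive.

Import GRing.Theory Num.Theory.

Definition adjE (V : finType) (E : {set {set V}}) : rel V :=
  fun a b => (a != b) && ([set a; b] \in E).

Definition tpath (V : finType) (E : {set {set V}}) (x y : V) (p : seq V) : Prop :=
  path (adjE E) x p /\ uniq (x :: p) /\ last x p = y.

Definition on_path (V : finType) (E : {set {set V}}) (x y v : V) : Prop :=
  exists p, tpath E x y p /\ v \in x :: p.

Definition is_tree (V : finType) (VT : {set V}) (ET : {set {set V}}) : Prop :=
  [/\ (forall e, e \in ET -> exists a b, [/\ a != b, a \in VT, b \in VT & e = [set a; b]]),
      (forall x y, x \in VT -> y \in VT -> exists p, tpath ET x y p) &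
      (forall x p, ~ [/\ path (adjE ET) x p, uniq (x :: p), 2 <= size p
                       & adjE ET (last x p) x])].

Definition child (V : finType) (ET : {set {set V}}) (r p u : V) : Prop :=
  [/\ [set p; u] \in ET, p != u & on_path ET r u p].

Definition leaf (V : finType) (VT : {set V}) (ET : {set {set V}}) (r l : V) : Prop :=
  [/\ l \in VT, l != r & forall u, ~ child ET r l u].

Definition extended (V : finType) (VT : {set V}) (ET : {set {set V}}) (r : V) : Prop :=
  forall l, leaf VT ET r l -> forall p w, child ET r p l -> child ET r p w -> w = l.

Record tree_dec (V : finType) := TreeDec {
  ntrees : nat;
  tV : 'I_ntrees -> {set V};
  tE : 'I_ntrees -> {set {set V}};
  troot : 'I_ntrees -> V }.
Arguments tV {V} t _.
Arguments tE {V} t _.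
Arguments troot {V} t _.

Definition tleaf (V : finType) (D : tree_dec V) (i : 'I_(ntrees D)) (l : V) : Prop :=
  leaf (tV D i) (tE D i) (troot D i) l.
Arguments tleaf {V} D i l.

Definition bt_based (V : finType) (VH : {set V}) (EH : {set {set V}}) (D : tree_dec V)
  : Prop :=
  [/\ VH = \bigcup_(i < ntrees D) tV D i /\
      EH = \bigcup_(i < ntrees D) tE D i,
      (forall i, [/\ is_tree (tV D i) (tE D i), troot D i \in tV D i
                   & extended (tV D i) (tE D i) (troot D i)]),
      (forall i j, i != j -> tE D i :&: tE D j = set0),
      (forall i l, tleaf D i l -> exists j1 j2, j1 != j2 /\
                   forall j, tleaf D j l <-> (j = j1 \/ j = j2)) &
      (forall i j, i != j ->
         (forall u v, u \in tV D i :&: tV D j -> v \in tV D i :&: tV D j -> u = v) /\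
         (forall v, v \in tV D i :&: tV D j -> tleaf D i v /\ tleaf D j v))].

Definition adjacent (V : finType) (D : tree_dec V) (i j : 'I_(ntrees D)) : Prop :=
  i != j /\ exists l, tleaf D i l /\ tleaf D j l.
Arguments adjacent {V} D i j.

Definition VP (V : finType) (D : tree_dec V) (i j : 'I_(ntrees D)) : {set V} :=
  [set v | `[< on_path (tE D i :|: tE D j) (troot D i) (troot D j) v >]].
Arguments VP {V} D i j.

(* literals: (v, true) is the positive literal v, (v, false) its negation *)
Definition clause (V : finType) (D : tree_dec V) (i j : 'I_(ntrees D)) : {set V * bool} :=
  [set (v, true) | v in VP D i j].
Arguments clause {V} D i j.

Definition lit_set (V : finType) (S : {set V * bool}) : Prop :=
  forall v, ~~ (((v, true) \in S) && ((v, false) \in S)).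

Definition Vars (V : finType) (S : {set V * bool}) : {set V} :=
  [set v | ((v, true) \in S) || ((v, false) \in S)].

Definition SAT (V : finType) (VH : {set V}) (D : tree_dec V) : {set {set V * bool}} :=
  [set S | `[< [/\ lit_set S, Vars S = VH &
      forall i j, adjacent D i j -> exists x, x \in S /\ x \in clause D i j] >]].

Definition Fix (V : finType) (D : tree_dec V) (S : {set V * bool}) : {set V * bool} :=
  [set x | `[< exists i j, adjacent D i j /\ exists l,
      [/\ x = (l, true), tleaf D i l, tleaf D j l, x \in S &
          forall v, v \in VP D i j -> v != l -> (v, false) \in S] >]].

(* Main.v *)
Require Import Defs.
From HB Require Import structures.
From mathcomp Require Import all_boot all_algebra.
From mathcomp Require Import boolp.
Import GRing.Theory Num.Theory.

Set Implicit Arguments.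
Unset Strict Implicit.
Unset Printing Implicit Defensive.

Section Graph.
Variable V : finType.
Implicit Types (VT W VB : {set V}) (ET E EB : {set {set V}}).

Lemma edge_in VT ET a b : is_tree VT ET -> [set a; b] \in ET -> a \in VT /\ b \in VT.
Proof.
case=> He _ _ /He [c [d [_ hc hd E]]].
have ha : a \in [set c; d] by rewrite -E set21.
have hb : b \in [set c; d] by rewrite -E set22.
by move: ha hb; rewrite !inE => /orP[]/eqP-> /orP[]/eqP->.
Qed.

Lemma path_in E W x p : (forall a b, adjE E a b -> b \in W) -> x \in W ->
  path (adjE E) x p -> {subset x :: p <= W}.
Proof.
move=> hE; elim: p x => [|y p IH] x hx /=.
  by move=> _ z; rewrite inE => /eqP->.
case/andP=> hxy hp z; rewrite inE => /orP[/eqP->//|].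
exact: (IH y (hE _ _ hxy) hp).
Qed.

Lemma leaf_deg VT ET r v y1 y2 : is_tree VT ET -> r \in VT -> v \in VT -> v != r ->
  (forall u, ~ child ET r v u) -> y1 != y2 -> adjE ET v y1 -> adjE ET v y2 -> False.
Proof.
move=> T hr hv hvr nch h12 a1 a2.
case: (T) => _ Tc Tac.
have [P [hP [uP lP]]] := Tc r v hr hv.
case/lastP: P hP uP lP => [|P' z] hP uP lP.
  by move: lP => /= /eqP; rewrite eq_sym (negbTE hvr).
rewrite last_rcons in lP; subst z.
have [y [hyx ay]] : exists y, y != last r P' /\ adjE ET v y.
  case: (eqVneq y1 (last r P')) => [e|ne]; last by exists y1.
  by exists y2; split=> //; rewrite -e eq_sym.
move: (ay) => /andP[nvy ey].
case: (boolP (y \in r :: P')) => yin; last first.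
  apply: (nch y); split=> //.
  exists (rcons (rcons P' v) y); split; last by rewrite !(inE, mem_rcons, eqxx, orbT).
  split; first by rewrite rcons_path hP last_rcons.
  split; last by rewrite last_rcons.
  rewrite -rcons_cons rcons_uniq uP andbT -rcons_cons mem_rcons inE negb_or.
  by rewrite eq_sym nvy.
rewrite inE in yin; case/orP: yin => [/eqP eyr | yP'].
  apply: (Tac r (rcons P' v)); split=> //; last by rewrite last_rcons -eyr.
  rewrite size_rcons; case: P' {hP uP} hyx => //=.
  by rewrite eyr eqxx.
move: hP uP hyx; case/splitPr: yP' => P1 P2 hP uP hyx.
apply: (Tac y (rcons P2 v)); split.
- by move: hP; rewrite rcons_cat cat_path /= => /andP[_ /andP[]].
- by move: uP; rewrite rcons_cat -cat_cons cat_uniq => /and3P[].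
- rewrite size_rcons; case: P2 {hP uP} hyx => //=.
  by rewrite last_cat /= eqxx.
- by rewrite last_rcons.
Qed.

Lemma core VT ET VB EB r v x p : is_tree VT ET -> r \in VT -> v \in VT -> v != r ->
  (forall u, ~ child ET r v u) ->
  (forall e a, e \in EB -> a \in e -> a \in VB) -> v \notin VB ->
  path (adjE (ET :|: EB)) x p -> uniq (x :: p) -> v \in x :: p -> v != x ->
  v != last x p -> False.
Proof.
move=> T hr hv hvr nch hEB nvB hp up vin vx vl.
have vp : v \in p by move: vin; rewrite inE (negbTE vx).
move: hp up vl; case/splitPr: vp => p1 p2 hp up vl.
case: p2 hp up vl => [|w p3] hp up vl.
  by move: vl; rewrite last_cat /= eqxx.
move: hp; rewrite cat_path /= => /and3P[_ auv /andP[avw _]].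
move: up; rewrite -cat_cons cat_uniq => /and3P[_ hd _].
have uw : last x p1 != w.
  apply/eqP=> e; move: hd; rewrite /= negb_or => /andP[_]; rewrite negb_or => /andP[].
  by rewrite -e mem_last.
have inET a b : adjE (ET :|: EB) a b -> v \in [set a; b] -> adjE ET a b.
  case/andP=> ab; rewrite inE => /orP[e|e] vab; first by rewrite /adjE ab.
  by rewrite (hEB _ _ e vab) in nvB.
have a1 : adjE ET v (last x p1).
  have := inET _ _ auv; rewrite set22 => /(_ isT) /andP[h1 h2].
  by rewrite /adjE eq_sym h1 setUC.
have a2 : adjE ET v w := inET _ _ avw (set21 _ _).
exact: (leaf_deg T hr hv hvr nch uw a1 a2).
Qed.

End Graph.

Section TD.
Variables (V : finType) (VH : {set V}) (EH : {set {set V}}) (D : tree_dec V).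
Hypothesis HD : bt_based VH EH D.

Lemma treeD i : [/\ is_tree (tV D i) (tE D i), troot D i \in tV D i
                   & extended (tV D i) (tE D i) (troot D i)].
Proof. by case: HD. Qed.

Lemma interD i j : i != j ->
         (forall u v, u \in tV D i :&: tV D j -> v \in tV D i :&: tV D j -> u = v) /\
         (forall v, v \in tV D i :&: tV D j -> tleaf D i v /\ tleaf D j v).
Proof. by case: HD => _ _ _ _; apply. Qed.

Lemma adj_union i j a b : adjE (tE D i :|: tE D j) a b -> b \in tV D i :|: tV D j.
Proof.
case/andP=> _; rewrite inE => /orP[] e.
  by have [t _ _] := treeD i; have [_ h] := edge_in t e; rewrite inE h.
have [t _ _] := treeD j.
by have [_ h] := edge_in t e; rewrite inE h orbT.
Qed.

Lemma VP_in i j v : v \in VP D i j -> v \in tV D i :|: tV D j.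
Proof.
rewrite inE => /asboolP [p [[hp [_ _]] vin]].
apply: (path_in (@adj_union i j) _ hp vin).
by have [_ h _] := treeD i; rewrite inE h.
Qed.

Lemma VP_VH i j v : v \in VP D i j -> v \in VH.
Proof.
move/VP_in; case: HD => [[-> _]] _ _ _ _.
by rewrite inE => /orP[] h; apply/bigcupP; [exists i | exists j].
Qed.

Lemma leaf_VP i j l : adjacent D i j -> tleaf D i l -> tleaf D j l -> l \in VP D i j.
Proof.
case=> nij _ [li _ _] [lj _ _].
have [ti ri _] := treeD i; have [tj rj _] := treeD j.
have [p1 [hp1 [u1 l1]]] := (let: And3 _ c _ := ti in c) _ _ ri li.
have [p2 [hp2 [u2 l2]]] := (let: And3 _ c _ := tj in c) _ _ lj rj.
rewrite inE; apply/asboolP; exists (p1 ++ p2); split; last first.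
  by rewrite -cat_cons mem_cat -l1 mem_last.
have sub1 : subrel (adjE (tE D i)) (adjE (tE D i :|: tE D j)).
  by move=> a b /andP[h1 h2]; rewrite /adjE h1 inE h2.
have sub2 : subrel (adjE (tE D j)) (adjE (tE D i :|: tE D j)).
  by move=> a b /andP[h1 h2]; rewrite /adjE h1 inE h2 orbT.
split.
  rewrite cat_path l1 (sub_path sub1 hp1) /=.
  exact: (sub_path sub2 hp2).
split; last by rewrite last_cat l1.
rewrite -cat_cons cat_uniq u1 /=; move: u2 => /= /andP[nl2 ->]; rewrite andbT.
apply/hasPn => y yp2; apply/negP => yp1.
have yi : y \in tV D i.
  apply: (path_in (W := tV D i) _ ri hp1 yp1).
  by move=> a b /andP[_ e]; have [] := edge_in ti e.
have yj : y \in tV D j.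
  apply: (path_in (W := tV D j) _ lj hp2); last by rewrite inE yp2 orbT.
  by move=> a b /andP[_ e]; have [] := edge_in tj e.
have e : y = l.
  by apply: (proj1 (interD nij)); rewrite inE ?yi ?yj ?li ?lj.
by move: nl2; rewrite -e yp2.
Qed.

Lemma leaf_uniq i j l v k : adjacent D i j -> tleaf D i l -> tleaf D j l ->
  v \in VP D i j -> tleaf D k v -> v = l.
Proof.
move=> [nij _] tli tlj vP tkv.
have [li _ _] := tli; have [lj _ _] := tlj.
have [vk _ _] := tkv.
have vu := VP_in vP.
move: vP; rewrite inE => /asboolP [p [[hp [up lp]] vin]].
have [ti ri _] := treeD i; have [tj rj _] := treeD j.
apply/eqP; apply/negPn/negP => nvl.
case: (boolP (v \in tV D i)) => vi; case: (boolP (v \in tV D j)) => vj.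
- by rewrite (proj1 (interD nij) v l) ?eqxx ?inE ?vi ?vj ?li ?lj in nvl.
- have tiv : tleaf D i v.
    case: (eqVneq k i) => [<-//|nki].
    by apply: (proj2 (proj2 (interD nki) v _)); rewrite inE vk vi.
  have [_ vr nch] := tiv.
  apply: (core ti ri vi vr nch (VB := tV D j) (EB := tE D j) _ vj hp up vin).
  - by move=> e a eE ae; have [+ _ _] := tj => /(_ e eE) [c [d [_ hc hd E]]];
       move: ae; rewrite E !inE => /orP[]/eqP->.
  - by [].
  - by rewrite lp; apply/eqP => e; rewrite e rj in vj.
- have tjv : tleaf D j v.
    case: (eqVneq k j) => [<-//|nkj].
    by apply: (proj2 (proj2 (interD nkj) v _)); rewrite inE vk vj.
  have [_ vr nch] := tjv.
  rewrite setUC in hp.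
  apply: (core tj rj vj vr nch (VB := tV D i) (EB := tE D i) _ vi hp up vin).
  - by move=> e a eE ae; have [+ _ _] := ti => /(_ e eE) [c [d [_ hc hd E]]];
       move: ae; rewrite E !inE => /orP[]/eqP->.
  - by apply/eqP => e; move: vi; rewrite e ri.
  - by rewrite lp.
- by move: vu; rewrite inE (negbTE vi) (negbTE vj).
Qed.

End TD.

Section Comb.
Variables (V : finType) (VH : {set V}) (D : tree_dec V).
Hypothesis H1 : forall i j v, v \in VP D i j -> v \in VH.
Hypothesis H2 : forall i j l, adjacent D i j -> tleaf D i l -> tleaf D j l -> l \in VP D i j.
Hypothesis H3 : forall i j l v k, adjacent D i j -> tleaf D i l -> tleaf D j l ->
  v \in VP D i j -> tleaf D k v -> v = l.

Definition mkS (P : V -> bool) : {set V * bool} :=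
  [set x | (x.1 \in VH) && (x.2 == P x.1)].
Definition tot (S : {set V * bool}) := lit_set S /\ Vars S = VH.
Definition Tot := [set S | `[< tot S >]].
Definition bad (s : {set V * bool}) v : bool :=
  `[< exists i j, adjacent D i j /\ [/\ tleaf D i v, tleaf D j v &
        forall u, u \in VP D i j -> (u, false) \in s] >].
Definition f (s : {set V * bool}) := mkS (fun v => ((v, true) \in s) || bad s v).
Definition g (S F : {set V * bool}) := mkS (fun v => ((v, true) \in S) && ((v, true) \notin F)).

Lemma mkSE P v b : ((v, b) \in mkS P) = (v \in VH) && (b == P v).
Proof. by rewrite inE. Qed.

Lemma mkS_tot P : tot (mkS P).
Proof.
split.
  by move=> v; rewrite !mkSE; case: (P v); rewrite ?andbF.
by apply/setP => v; rewrite inE !mkSE; case: (v \in VH); case: (P v).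
Qed.

Lemma tot_mem S v b : tot S -> ((v, b) \in S) = (v \in VH) && (b == ((v, true) \in S)).
Proof.
case=> ls vs; have := ls v; rewrite -vs inE.
case: b; case: ((v, true) \in S); case: ((v, false) \in S) => //.
Qed.

Lemma tot_eq S1 S2 : tot S1 -> tot S2 ->
  (forall v, v \in VH -> ((v, true) \in S1) = ((v, true) \in S2)) -> S1 = S2.
Proof.
move=> t1 t2 E; apply/setP => [[v b]]; rewrite (tot_mem _ _ t1) (tot_mem _ _ t2).
by case: (boolP (v \in VH)) => //= h; rewrite E.
Qed.

Lemma tot_card S : tot S -> #|S| = #|VH|.
Proof.
move=> t; have -> : S = (fun v => (v, (v, true) \in S)) @: VH.
  apply/setP => [[v b]]; rewrite (tot_mem _ _ t); apply/idP/imsetP.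
    by case/andP=> h /eqP ->; exists v.
  by case=> w hw [-> ->]; rewrite hw eqxx.
by apply: card_imset => a c [].
Qed.

Lemma card_Tot : #|Tot| = 2 ^ #|VH|.
Proof.
have -> : Tot = (fun X : {set V} => mkS (fun v => v \in X)) @: powerset VH.
  apply/setP => S; rewrite inE; apply/asboolP/imsetP.
    move=> t; exists [set v in VH | (v, true) \in S].
      by rewrite inE; apply/subsetP => v; rewrite inE => /andP[].
    apply: tot_eq => // [|v hv]; first exact: mkS_tot.
    by rewrite mkSE /= !inE hv.
  by case=> X _ ->; exact: mkS_tot.
rewrite card_in_imset ?card_powerset // => X Y.
rewrite !inE => /subsetP sX /subsetP sY E; apply/setP => v.
have := congr1 (fun S : {set V * bool} => (v, true) \in S) E; rewrite /= !mkSE /=.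
case: (boolP (v \in VH)) => //= hv.
by case: (boolP (v \in X)) => hX; case: (boolP (v \in Y)) => hY //;
  [move: (sX _ hX) | move: (sY _ hY)]; rewrite (negbTE hv).
Qed.

Lemma SAT_tot S : S \in SAT VH D -> tot S.
Proof. by rewrite inE => /asboolP []. Qed.

Lemma FixP S x : x \in Fix D S -> exists l, x = (l, true) /\
  exists i j, adjacent D i j /\ [/\ tleaf D i l, tleaf D j l, x \in S &
          forall v, v \in VP D i j -> v != l -> (v, false) \in S].
Proof.
rewrite inE => /asboolP [i [j [adj [l [-> a b c d]]]]].
by exists l; split=> //; exists i, j.
Qed.

Lemma Fix_sub S : Fix D S \subset S.
Proof. by apply/subsetP => x /FixP [l [-> [i [j [_ []]]]]]. Qed.

Lemma f_SAT s : tot s -> f s \in SAT VH D.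
Proof.
move=> ts; rewrite inE; apply/asboolP; have [ls vs] := mkS_tot (fun v => ((v, true) \in s) || bad s v).
split=> // i j adj.
case: (boolP [exists v, (v \in VP D i j) && ((v, true) \in s)]).
  case/existsP => v /andP[vP vs'].
  exists (v, true); split; last by apply/imsetP; exists v.
  by rewrite mkSE (H1 vP) vs'.
rewrite negb_exists => /forallP hn.
have [_ [l [tli tlj]]] := adj.
exists (l, true); split; last by apply/imsetP; exists l => //; apply: H2.
have lP := H2 adj tli tlj.
rewrite mkSE (H1 lP) /=; apply/orP; right; apply/asboolP.
exists i, j; split=> //; split=> // u uP.
rewrite (tot_mem _ _ ts) (H1 uP) /=.
by have := hn u; rewrite uP /= => /negbTE ->.
Qed.

Lemma fiber S : S \in SAT VH D ->
  [set s in Tot | f s == S] = (g S) @: powerset (Fix D S).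
Proof.
move=> SS; have tS := SAT_tot SS.
have satS : forall i j, adjacent D i j -> exists x, x \in S /\ x \in clause D i j.
  by move: SS; rewrite inE => /asboolP [].
apply/setP => s; rewrite !inE; apply/andP/imsetP.
- case=> /asboolP ts /eqP fs.
  have tS' : forall v, v \in VH -> ((v, true) \in S) = ((v, true) \in s) || bad s v.
    by move=> v hv; rewrite -fs mkSE hv.
  exists (S :\: s).
    rewrite inE; apply/subsetP => [[v b]]; rewrite inE => /andP[nvs vS].
    have hv : v \in VH by move: vS; rewrite (tot_mem _ _ tS) => /andP[].
    case: b nvs vS => nvs vS; last first.
      move: vS nvs; rewrite (tot_mem _ _ tS) (tot_mem _ _ ts) hv tS' //=.
      by case: ((v, true) \in s).
    have nt : (v, true) \notin s by [].
    have bv : bad s v by move: vS; rewrite tS' // (negbTE nt).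
    move: bv => /asboolP [i [j [adj [tli tlj hall]]]].
    rewrite inE; apply/asboolP; exists i, j; split=> //; exists v; split=> //.
    move=> u uP nuv; rewrite (tot_mem _ _ tS) (H1 uP) /= tS' ?(H1 uP) //.
    have := hall u uP; rewrite (tot_mem _ _ ts) (H1 uP) /= => /eqP <- /=.
    apply/negP => /asboolP [i' [j' [adj' [tli' _ _]]]].
    by move: nuv; rewrite (H3 adj tli tlj uP tli') eqxx.
  apply: tot_eq => //; first exact: mkS_tot.
  move=> v hv; rewrite mkSE hv /= inE negb_and negbK tS' //.
  by case: ((v, true) \in s); case: (bad s v).
- case=> F; rewrite inE => /subsetP sF ->.
  split; first by apply/asboolP; exact: mkS_tot.
  apply/eqP; apply: tot_eq => //; first exact: mkS_tot.
  move=> v hv; rewrite mkSE hv /= mkSE hv /=.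
  case: (boolP ((v, true) \in S)) => vS /=; last first.
    apply/negP => /asboolP [i [j [adj [tli tlj hall]]]].
    have [x [xS /imsetP [u uP ex]]] := satS i j adj; subst x.
    have := hall u uP; rewrite mkSE (H1 uP) /= xS /=; case uF: ((u, true) \in F) => // _.
    have [l [[el] [i' [j' [_ [tli' _ _ _]]]]]] := FixP (sF _ uF); subst l.
    by move: vS; rewrite -(H3 adj tli tlj uP tli') xS.
  case: (boolP ((v, true) \in F)) => vF //=.
  have [l [[el] [i [j [adj [tli tlj _ hall]]]]]] := FixP (sF _ vF); subst l.
  apply/asboolP; exists i, j; split=> //; split=> // u uP.
  rewrite mkSE (H1 uP) /=.
  case: (eqVneq u v) => [->|nuv]; first by rewrite vF andbF.
  have := hall u uP nuv; rewrite (tot_mem _ _ tS) (H1 uP) /= => /eqP <-.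
  by [].
Qed.

Lemma g_inj S : S \in SAT VH D -> {in powerset (Fix D S) &, injective (g S)}.
Proof.
move=> SS F1 F2; rewrite !inE => /subsetP s1 /subsetP s2 E.
have key : forall A B : {set V * bool}, {subset A <= Fix D S} -> g S A = g S B -> {subset A <= B}.
  move=> A B sA EAB x xA.
  have [l [el [i [j [_ [_ _ xS _]]]]]] := FixP (sA _ xA); subst x.
  have hl : l \in VH by move: xS; rewrite (tot_mem _ _ (SAT_tot SS)) => /andP[].
  have := congr1 (fun T : {set V * bool} => (l, false) \in T) EAB; rewrite /= !mkSE hl /= xS xA /=.
  by case: ((l, true) \in B).
by apply/setP => x; apply/idP/idP; apply: key.
Qed.

Lemma sum_fix : \sum_(S in SAT VH D) 2 ^ #|Fix D S| = 2 ^ #|VH|.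
Proof.
rewrite -card_Tot -sum1_card; symmetry.
rewrite (partition_big f (mem (SAT VH D))) /=; last first.
  by move=> s; rewrite inE => /asboolP t; exact: f_SAT.
apply: eq_bigr => S SS.
rewrite sum1dep_card.
have -> : [set x | (x \in Tot) && (f x == S)] = [set s in Tot | f s == S] by [].
by rewrite fiber // card_in_imset ?card_powerset //; exact: g_inj.
Qed.

End Comb.

Local Open Scope ring_scope.

Lemma pow_half n k : (k <= n)%N ->
  ((2%:R : rat)^-1) ^+ (n - k) = (2 ^ k)%:R / (2 ^ n)%:R.
Proof.
move=> kn; rewrite -{2}(subnK kn) expnD natrM !natrX exprVn invfM mulrCA mulfV ?mulr1 //.
by rewrite expf_neq0 // pnatr_eq0.
Qed.


Theorem proposition1 (V : finType) (VH : {set V}) (EH : {set {set V}})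
  (D : tree_dec V) (HD : bt_based VH EH D) :
  \sum_(S in SAT VH D) ((2%:R : rat)^-1) ^+ #|S :\: Fix D S| = 1.
Proof.
have h1 := VP_VH HD; have h2 := leaf_VP HD; have h3 := leaf_uniq HD.
rewrite (eq_bigr (fun S => (2 ^ #|Fix D S|)%:R / (2 ^ #|VH|)%:R)); last first.
  move=> S SS; have tS := SAT_tot SS.
  rewrite cardsD (setIidPr (Fix_sub D S)) (tot_card tS) pow_half //.
  by rewrite -(tot_card tS) subset_leq_card // Fix_sub.
rewrite -mulr_suml -natr_sum (sum_fix h1 h2 h3) mulfV //.
by rewrite pnatr_eq0 expn_eq0.
Qed.
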